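(* Assume Assumption 1, Assumption 2 and the null hypothesis $H_0:\ T_i(1)=T_i(0)$ for all $i$, and condition on $\boldsymbol{T}(1),\boldsymbol{T}(0)$. Then for every unit $i$ and time $t$, $$\mathbb{E}\{Z_i\mathbb{1}(W_i\ge t)\mid\boldsymbol{T}(1),\boldsymbol{T}(0),\mathbb{1}(W_i\ge t),\Delta_i\mathbb{1}(W_i=t)\}=\mathbb{E}\{Z_i\mathbb{1}(W_i\ge t)\mid\boldsymbol{T}(1),\boldsymbol{T}(0),\mathbb{1}(W_i\ge t)\}=\mathbb{1}(W_i\ge t)\,\phi(t).$$
   Context: There are $n$ units. Unit $i$ has potential event times $T_i(1),T_i(0)\ge 0$, potential censoring times $C_i(1),C_i(0)\in[0,\infty]$, and treatment indicator $Z_i\in\{0,1\}$; bold letters denote $n$-vectors. Assumption 1: conditional on $\boldsymbol{T}(1),\boldsymbol{T}(0),\boldsymbol{C}(1),\boldsymbol{C}(0)$, the $Z_i$ are i.i.d. Bernoulli$(p_1)$, $p_1=1-p_0\in(0,1)$. Assumption 2: $(\boldsymbol{C}(1),\boldsymbol{C}(0))$ is independent of $(\boldsymbol{T}(1),\boldsymbol{T}(0))$ and the pairs $(C_i(1),C_i(0))$ are i.i.d. across $i$. $G_z(c)=\Pr(C_i(z)\ge c)$, $\phi(t)=p_1G_1(t)/\{p_1G_1(t)+p_0G_0(t)\}$. Realized: $T_i=Z_iT_i(1)+(1-Z_i)T_i(0)$, $C_i=Z_iC_i(1)+(1-Z_i)C_i(0)$, $W_i=\min\{T_i,C_i\}$,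 $\Delta_i=\mathbb{1}(T_i\le C_i)$. *)

(* Defs.v *)
From HB Require Import structures.
From mathcomp Require Import all_boot all_order all_algebra.
From mathcomp Require Import all_classical all_reals all_analysis.
From mathcomp Require Import measurable_realfun.

Set Implicit Arguments.
Unset Strict Implicit.
Unset Printing Implicit Defensive.

Import Order.TTheory GRing.Theory Num.Theory.

Local Open Scope classical_set_scope.
Local Open Scope ring_scope.

Definition realized_T {R : realType} {Omega : Type}
  (Z : Omega -> R) (t1 t0 : R) : Omega -> R :=
  fun w => Z w * t1 + (1 - Z w) * t0.

(* Realized censoring time C_i = Z_i C_i(1) + (1 - Z_i) C_i(0), in [0,+oo]
   (mathcomp convention 0 * +oo = 0). *)
Definition realized_C {R : realType} {Omega : Type}
  (Z : Omega -> R) (C1 C0 : Omega -> \bar R) : Omega -> \bar R :=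
  fun w => ((Z w)%:E * C1 w + (1 - Z w)%:E * C0 w)%E.

Definition obs_W {R : realType} {Omega : Type}
  (T : Omega -> R) (C : Omega -> \bar R) : Omega -> \bar R :=
  fun w => Order.min (T w)%:E (C w).

Definition obs_Delta {R : realType} {Omega : Type}
  (T : Omega -> R) (C : Omega -> \bar R) : Omega -> bool :=
  fun w => ((T w)%:E <= C w)%E.

(* Mutual independence of Z_1,...,Z_n,(C_1(1),C_1(0)),...,(C_n(1),C_n(0)),
   stated on the generating pi-system of measurable rectangles. *)
Definition indep_Z_Cpairs {d} {Omega : measurableType d} {R : realType}
  (P : probability Omega R) (n : nat)
  (Z : 'I_n -> Omega -> R) (C1 C0 : 'I_n -> Omega -> \bar R) : Prop :=
  forall (A : 'I_n -> set R) (B D : 'I_n -> set (\bar R)),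
    (forall i, measurable (A i)) -> (forall i, measurable (B i)) ->
    (forall i, measurable (D i)) ->
    P (\bigcap_(i in [set: 'I_n])
         (Z i @^-1` A i `&` (C1 i @^-1` B i `&` C0 i @^-1` D i))) =
    (\prod_(i < n) (P (Z i @^-1` A i) * P (C1 i @^-1` B i `&` C0 i @^-1` D i)))%E.

Definition ident_distr_Cpairs {d} {Omega : measurableType d} {R : realType}
  (P : probability Omega R) (n : nat) (C1 C0 : 'I_n -> Omega -> \bar R) : Prop :=
  forall (i j : 'I_n) (B D : set (\bar R)), measurable B -> measurable D ->
    P (C1 i @^-1` B `&` C0 i @^-1` D) = P (C1 j @^-1` B `&` C0 j @^-1` D).

Definition Gsurv {d} {Omega : measurableType d} {R : realType}
  (P : probability Omega R) (C : Omega -> \bar R) (c : R) : R :=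
  fine (P [set w | (c%:E <= C w)%E]).

Definition phi {R : realType} (p1 G1t G0t : R) : R :=
  p1 * G1t / (p1 * G1t + (1 - p1) * G0t).

(* g is a version of E[X | sigma(Y)] for a finitely-valued Y:
   g is a function of Y and E[X 1{Y in B}] = E[g 1{Y in B}] for every B. *)
Definition cond_exp_version {d} {Omega : measurableType d} {R : realType}
  (P : probability Omega R) {V : finType}
  (X : Omega -> R) (Y : Omega -> V) (g : Omega -> R) : Prop :=
  (exists h : V -> R, forall w, g w = h (Y w)) /\
  forall B : {set V},
    (\int[P]_(w in Y @^-1` [set v | v \in B]) (X w)%:E =
     \int[P]_(w in Y @^-1` [set v | v \in B]) (g w)%:E)%E.

(* Main.v *)
Require Import Defs.
From HB Require Import structures.
From mathcomp Require Import all_boot all_order all_algebra.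
From mathcomp Require Import all_classical all_reals all_analysis.
From mathcomp Require Import measurable_realfun.
From mathcomp Require Import lra.
Import Order.TTheory GRing.Theory Num.Theory.
Local Open Scope classical_set_scope.
Local Open Scope ring_scope.

Lemma mem_setb (T : Type) (b : T -> bool) w : (w \in [set x | b x]) = b w.
Proof. by apply/idP/idP => [/set_mem|/mem_set]. Qed.

Lemma core (d : measure_display) (Omega : measurableType d) (R : realType)
  (P : probability Omega R) (p1 t : R) (C1 C0 : Omega -> \bar R) (Z : Omega -> R) :
  0 < p1 < 1 ->
  measurable_fun setT C1 -> measurable_fun setT C0 -> measurable_fun setT Z ->
  (forall w, Z w = 0 \/ Z w = 1) ->
  P (Z @^-1` [set 1]) = p1%:E ->
  (forall A B D, measurable A -> measurable B -> measurable D ->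
     P (Z @^-1` A `&` (C1 @^-1` B `&` C0 @^-1` D)) =
     (P (Z @^-1` A) * P (C1 @^-1` B `&` C0 @^-1` D))%E) ->
  forall q : bool -> bool,
  let C := realized_C Z C1 C0 in
  (\int[P]_(w in [set w | q (t%:E <= C w)%E]) (Z w * ((t%:E <= C w)%E)%:R)%:E =
   \int[P]_(w in [set w | q (t%:E <= C w)%E])
      (((t%:E <= C w)%E)%:R * phi p1 (Gsurv P C1 t) (Gsurv P C0 t))%:E)%E.
Proof.
move=> /andP[p10 p11] mC1 mC0 mZ Z01 PZ1 ind q C.
have mpre : forall d2 (U : measurableType d2) (f : Omega -> U), measurable_fun setT f ->
   forall B, measurable B -> measurable (f @^-1` B).
  by move=> d2 U f mf B mB; rewrite -[_ @^-1` _]setTI; exact: mf.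
have eqI : [set x : \bar R | (t%:E <= x)%E] = [set` `[t%:E, +oo[].
  by apply/funext => y /=; rewrite in_itv /= andbT.
have mI : measurable [set x : \bar R | (t%:E <= x)%E].
  by rewrite eqI; exact: emeasurable_itv.
have hC1 : forall w, Z w = 1 -> C w = C1 w.
  by move=> w Zw; rewrite /C /realized_C Zw subrr mul1e mul0e adde0.
have hC0 : forall w, Z w = 0 -> C w = C0 w.
  by move=> w Zw; rewrite /C /realized_C Zw subr0 mul1e mul0e add0e.
set K := [set w | (t%:E <= C w)%E].
set Z1 := Z @^-1` [set 1]. set Z0 := Z @^-1` [set 0].
set E1 := Z1 `&` [set w | (t%:E <= C1 w)%E].
set E0 := Z0 `&` [set w | (t%:E <= C0 w)%E].
have mZ1 : measurable Z1 by exact: (mpre _ _ _ mZ _ (measurable_set1 _)).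
have mZ0 : measurable Z0 by exact: (mpre _ _ _ mZ _ (measurable_set1 _)).
have mK1 : measurable [set w | (t%:E <= C1 w)%E] by exact: (mpre _ _ _ mC1 _ mI).
have mK0 : measurable [set w | (t%:E <= C0 w)%E] by exact: (mpre _ _ _ mC0 _ mI).
have mE1 : measurable E1 by apply: measurableI.
have mE0 : measurable E0 by apply: measurableI.
have hK : K = E1 `|` E0.
  apply/funext => w; apply/propext; rewrite /K /E1 /E0 /Z1 /Z0 /=.
  case: (Z01 w) => Zw.
    rewrite hC0 // Zw; split; [by move=> h; right|case => -[] //].
    by move=> /eqP; rewrite eq_sym oner_eq0.
  rewrite hC1 // Zw; split; [by move=> h; left|case => -[] //].
  by move=> /eqP; rewrite oner_eq0.
have mK : measurable K by rewrite hK; apply: measurableU.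
set S := [set w | q (t%:E <= C w)%E].
have mS : measurable S.
  case hqt: (q true); case hqf: (q false).
  - rewrite (_ : S = setT); first exact: measurableT.
    by apply/funext => w; apply/propext; rewrite /S /=; case: (_ <= _)%E; rewrite ?hqt ?hqf.
  - rewrite (_ : S = K) //.
    by apply/funext => w; apply/propext; rewrite /S /K /=; case: (_ <= _)%E; rewrite ?hqt ?hqf.
  - rewrite (_ : S = ~` K); first exact: measurableC.
    apply/funext => w; apply/propext; rewrite /S /K /=; case: (_ <= _)%E; rewrite ?hqt ?hqf //.
    by split => // /(_ isT).
  - rewrite (_ : S = set0) //.
    by apply/funext => w; apply/propext; rewrite /S /=; case: (_ <= _)%E; rewrite ?hqt ?hqf.
have G1E : P [set w | (t%:E <= C1 w)%E] = (Gsurv P C1 t)%:E.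
  by rewrite /Gsurv fineK //; exact: fin_num_measure.
have G0E : P [set w | (t%:E <= C0 w)%E] = (Gsurv P C0 t)%:E.
  by rewrite /Gsurv fineK //; exact: fin_num_measure.
have G1ge0 : 0 <= Gsurv P C1 t by rewrite /Gsurv fine_ge0.
have G0ge0 : 0 <= Gsurv P C0 t by rewrite /Gsurv fine_ge0.
have PE1 : P E1 = (p1 * Gsurv P C1 t)%:E.
  have := ind [set 1] [set x | (t%:E <= x)%E] setT (measurable_set1 _) mI measurableT.
  by rewrite preimage_setT setIT PZ1 -/Z1 => ->; rewrite EFinM; congr (_ * _)%E.
have Z0E : Z0 = ~` Z1.
  apply/funext => w; apply/propext; rewrite /Z0 /Z1 /=.
  case: (Z01 w) => ->.
    by split => // _ /eqP; rewrite eq_sym oner_eq0.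
  by split => [/eqP|/(_ erefl)] //; rewrite oner_eq0.
have PE0 : P E0 = ((1 - p1) * Gsurv P C0 t)%:E.
  have := ind [set 0] setT [set x | (t%:E <= x)%E] (measurable_set1 _) measurableT mI.
  rewrite preimage_setT setTI -/Z0 => ->.
  by rewrite EFinM Z0E probability_setC // PZ1 EFinB; congr (_ * _)%E.
have PK : P K = (p1 * Gsurv P C1 t + (1 - p1) * Gsurv P C0 t)%:E.
  rewrite hK measureU //; first by rewrite EFinD -PE1 -PE0.
  rewrite -subset0 => w [[Zw _] [Z0w _]]; move: Zw Z0w; rewrite /Z1 /Z0 /= => -> /eqP; by rewrite oner_eq0.
set ph := phi p1 (Gsurv P C1 t) (Gsurv P C0 t).
have ph0 : 0 <= ph.
  rewrite /ph /phi; apply: divr_ge0; first by apply: mulr_ge0 => //; exact: ltW.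
  by apply: addr_ge0; apply: mulr_ge0 => //; rewrite ?subr_ge0 ltW.
have key : (p1 * Gsurv P C1 t) = ph * (p1 * Gsurv P C1 t + (1 - p1) * Gsurv P C0 t).
  rewrite /ph /phi.
  have a0 : 0 <= p1 * Gsurv P C1 t by apply: mulr_ge0 => //; exact: ltW.
  have b0 : 0 <= (1 - p1) * Gsurv P C0 t by apply: mulr_ge0 => //; rewrite subr_ge0 ltW.
  have [e|nz] := eqVneq (p1 * Gsurv P C1 t + (1 - p1) * Gsurv P C0 t) 0.
    rewrite e mulr0; move: a0 b0 e; set a := p1 * _; set b := (1 - p1) * _; move=> a0 b0 e.
    by lra.
  by rewrite divfK.
have E1K : E1 `<=` K by rewrite hK; exact: subsetUl.
apply: (@etrans _ _ (\int[P]_(w in S) (\1_E1 w)%:E)%E).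
  apply: eq_integral => w _; congr EFin; rewrite indicE.
  case: (Z01 w) => Zw.
    rewrite Zw mul0r memNset // => -[]; rewrite /Z1 /= Zw => /eqP.
    by rewrite eq_sym oner_eq0.
  rewrite Zw mul1r hC1 //; congr (_%:R); congr nat_of_bool.
  apply/esym; case: (boolP (w \in E1)) => [/set_mem [] _ -> //|].
  move=> H; apply/esym; apply: negbTE; apply: contra H => h; apply/mem_set; split => //.
apply: (@etrans _ _ (\int[P]_(w in S) (ph * \1_((fun _ : R => K) ph) w)%:E)%E); last first.
  by apply: eq_integral => w _; rewrite indicE mem_setb mulrC.
rewrite (@integralZl_indic _ _ _ P _ mS (fun _ : R => K) ph); last 2 first.
  by move=> /lt_geF; rewrite ph0.
  exact: mK.
rewrite !integral_indic //.
case hqt: (q true).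
  have KS : K `<=` S by move=> w Kw; rewrite /S /= Kw.
  rewrite setIidl; last exact: subset_trans E1K KS.
  rewrite setIidl //.
  by change (P E1 = ph%:E * P K)%E; rewrite PK -EFinM -key PE1.
have KS0 : K `&` S = set0.
  by rewrite -subset0 => w [Kw]; rewrite /S /= Kw hqt.
have E1S0 : E1 `&` S = set0.
  by rewrite -subset0 -KS0; apply: setSI.
by rewrite KS0 E1S0 !measure0 mule0.
Qed.


Theorem lemmaA1 (d : measure_display) (Omega : measurableType d) (R : realType)
  (P : probability Omega R) (n : nat) (p1 : R)
  (T1 T0 : 'I_n -> R) (C1 C0 : 'I_n -> Omega -> \bar R) (Z : 'I_n -> Omega -> R) :
  0 < p1 < 1 ->
  (* potential event times (conditioned on, hence fixed) *)
  (forall i, 0 <= T1 i) -> (forall i, 0 <= T0 i) ->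
  (* potential censoring times in [0, +oo] *)
  (forall i, measurable_fun setT (C1 i)) -> (forall i, measurable_fun setT (C0 i)) ->
  (forall i w, (0 <= C1 i w)%E) -> (forall i w, (0 <= C0 i w)%E) ->
  (* Assumption 1: Z_i i.i.d. Bernoulli(p1), independent of the censoring times *)
  (forall i, measurable_fun setT (Z i)) ->
  (forall i w, Z i w = 0 \/ Z i w = 1) ->
  (forall i, P (Z i @^-1` [set 1]) = p1%:E) ->
  indep_Z_Cpairs P Z C1 C0 ->
  (* Assumption 2: censoring pairs i.i.d. across units *)
  ident_distr_Cpairs P C1 C0 ->
  (* null hypothesis H0 *)
  (forall i, T1 i = T0 i) ->
  forall (i : 'I_n) (t : R),
    let T := realized_T (Z i) (T1 i) (T0 i) in
    let C := realized_C (Z i) (C1 i) (C0 i) in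
    let W := obs_W T C in
    let Delta := obs_Delta T C in
    let X := fun w => Z i w * ((t%:E <= W w)%E)%:R in
    let g := fun w => ((t%:E <= W w)%E)%:R *
                      phi p1 (Gsurv P (C1 i) t) (Gsurv P (C0 i) t) in
    cond_exp_version P X
      (fun w => ((t%:E <= W w)%E, Delta w && (W w == t%:E))) g /\
    cond_exp_version P X (fun w => (t%:E <= W w)%E) g.
Proof.
Proof.
move=> hp _ _ mC1 mC0 _ _ mZ Z01 PZ1 ind _ H0 i t T C W Delta X g.
have ind1 : forall A B D, measurable A -> measurable B -> measurable D ->
     P (Z i @^-1` A `&` (C1 i @^-1` B `&` C0 i @^-1` D)) =
     (P (Z i @^-1` A) * P (C1 i @^-1` B `&` C0 i @^-1` D))%E.
  move=> A B D mA mB mD.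
  have := ind (fun j => if j == i then A else setT) (fun j => if j == i then B else setT)
    (fun j => if j == i then D else setT).
  have mif : forall (dU : measure_display) (V : measurableType dU) (X0 : set V),
      measurable X0 -> forall j : 'I_n, measurable (if j == i then X0 else setT).
    by move=> dU V X0 mX0 j; case: ifP.
  move=> /(_ (mif _ _ _ mA) (mif _ _ _ mB) (mif _ _ _ mD)).
  rewrite (bigD1 i) //= eqxx big1 ?mule1; last first.
    by move=> j /negbTE ->; rewrite !preimage_setT setIT !probability_setT mule1.
  move=> <-; congr (P _); apply/seteqP; split => w.
    move=> h j _ /=; have [->|ne] := eqVneq j i; first exact: h.
    by [].
  by move=> /(_ i I) /=; rewrite ?eqxx.
set c := T1 i.
have hT : forall w, T w = c.
  by move=> w; rewrite /T /realized_T -H0 -mulrDl addrC subrK mul1r.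
have hW : forall w, (t%:E <= W w)%E = (t <= c) && (t%:E <= C w)%E.
  by move=> w; rewrite /W /obs_W le_min hT lee_fin.
have [tc|ct] := leP t c; last first.
  have X0 : forall w, X w = g w.
    by move=> w; rewrite /X /g hW (lt_geF ct) /= mulr0 mul0r.
  split; split.
  - by exists (fun v : bool * bool => (v.1 : bool)%:R * phi p1 (Gsurv P (C1 i) t) (Gsurv P (C0 i) t)).
  - by move=> B; apply: eq_integral => w _; rewrite X0.
  - by exists (fun v : bool => v%:R * phi p1 (Gsurv P (C1 i) t) (Gsurv P (C0 i) t)).
  - by move=> B; apply: eq_integral => w _; rewrite X0.
have hW' : forall w, (t%:E <= W w)%E = (t%:E <= C w)%E by move=> w; rewrite hW tc.
have hD : forall w, Delta w && (W w == t%:E) = (c == t) && (t%:E <= C w)%E.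
  move=> w; rewrite /Delta /obs_Delta hT.
  case: (boolP (c%:E <= C w)%E) => Dl /=.
    rewrite /W /obs_W hT min_l // eqe.
    by case: eqP => [e|] //=; rewrite -e.
  by case: eqP => //= e; rewrite -e; apply/esym/negbTE.
have eX : forall w, X w = Z i w * ((t%:E <= C w)%E)%:R by move=> w; rewrite /X hW'.
have eg : forall w, g w = ((t%:E <= C w)%E)%:R * phi p1 (Gsurv P (C1 i) t) (Gsurv P (C0 i) t).
  by move=> w; rewrite /g hW'.
have cr := @core d Omega R P p1 t (C1 i) (C0 i) (Z i) hp (mC1 i) (mC0 i) (mZ i) (Z01 i) (PZ1 i) ind1.
split; split.
- by exists (fun v : bool * bool => (v.1 : bool)%:R * phi p1 (Gsurv P (C1 i) t) (Gsurv P (C0 i) t)).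
- move=> B.
  rewrite (_ : _ @^-1` _ = [set w | (fun b => (b, (c == t) && b) \in B) (t%:E <= C w)%E]); last first.
    by apply/funext => w; rewrite /preimage /= hW' hD.
  rewrite (eq_integral (fun w => (Z i w * ((t%:E <= C w)%E)%:R)%:E)); last by move=> w _; rewrite eX.
  rewrite [in RHS](eq_integral (fun w => (((t%:E <= C w)%E)%:R * phi p1 (Gsurv P (C1 i) t) (Gsurv P (C0 i) t))%:E)); last by move=> w _; rewrite eg.
  exact: (cr (fun b => (b, (c == t) && b) \in B)).
- by exists (fun v : bool => v%:R * phi p1 (Gsurv P (C1 i) t) (Gsurv P (C0 i) t)).
- move=> B.
  rewrite (_ : _ @^-1` _ = [set w | (fun b => b \in B) (t%:E <= C w)%E]); last first.
    by apply/funext => w; rewrite /preimage /= hW'.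
  rewrite (eq_integral (fun w => (Z i w * ((t%:E <= C w)%E)%:R)%:E)); last by move=> w _; rewrite eX.
  rewrite [in RHS](eq_integral (fun w => (((t%:E <= C w)%E)%:R * phi p1 (Gsurv P (C1 i) t) (Gsurv P (C0 i) t))%:E)); last by move=> w _; rewrite eg.
  exact: cr.
Qed.
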